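(* There exists $p\in\mathcal P$ such that $D_{\mu(p)}(p)\neq N$ and $D_{\mu(p)}(p)\cap D_{\mu(p^r)}(p^r)\neq\varnothing$ if and only if $(h,n)\notin T_3$, where $T_3=\{(h,n): n=2\}\cup\{(3,3)\}$.
   Context: Let $n,h\ge2$ be integers, $N=\{1,\dots,n\}$, $H=\{1,\dots,h\}$. $\mathcal P$ is the set of $h$-tuples $p=(p_1,\dots,p_h)$ of linear orders on $N$; $p^r$ is obtained by reversing each $p_i$; $x>_{p_i}y$ means $x\ne y$ and $p_i$ ranks $x$ above $y$. For an integer $\mu$ with $h/2<\mu\le h$, $D_\mu(p)=\{x\in N: \forall y\in N,\ |\{i: y>_{p_i}x\}|<\mu\}$, and $\mu(p)=\min\{\mu\in\mathbb N\cap(h/2,h]: D_\mu(p)\neq\varnothing\}$. *)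

(* Defs.v *)
From mathcomp Require Import all_boot all_fingroup zify.
Set Implicit Arguments.
Unset Strict Implicit.
Unset Printing Implicit Defensive.

(* A linear order on N = 'I_n is represented by a permutation s : {perm 'I_n}
   giving the rank (position) of each alternative: position 0 is the top. *)
Definition profile (n h : nat) := {ffun 'I_h -> {perm 'I_n}}.

Definition above n (s : {perm 'I_n}) (x y : 'I_n) : bool := s x < s y.

Definition rev_perm n : {perm 'I_n} := perm (@rev_ord_inj n).

Definition rev_prof n h (p : profile n h) : profile n h :=
  [ffun i => (p i * rev_perm n)%g].

Lemma above_rev n h (p : profile n h) i x y :
  above (rev_prof p i) x y = above (p i) y x.
Proof.
rewrite /above /rev_prof !ffunE !permM /rev_perm !permE /=.
case: (p i x) => a Ha; case: (p i y) => b Hb /=.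
apply/idP/idP => H; lia.
Qed.

Definition D n h (mu : nat) (p : profile n h) : {set 'I_n} :=
  [set x | [forall y, #|[set i | above (p i) y x]| < mu]].

Definition muP n h (p : profile n h) (m : nat) : bool :=
  [&& h < 2 * m, m <= h & D m p != set0].

Lemma muP_ex n h (p : profile n h) :
  [exists m : 'I_h.+1, muP p m] -> exists m, muP p m.
Proof. by case/existsP=> m Hm; exists m. Qed.

(* mu(p) = min { mu in N cap (h/2, h] | D_mu(p) <> empty }.
   (The set is nonempty whenever n, h >= 1; the default 0 is never used
   under the standing assumptions n, h >= 2.) *)
Definition mu n h (p : profile n h) : nat :=
  match @idP [exists m : 'I_h.+1, muP p m] with
  | ReflectT H => ex_minn (muP_ex H)
  | ReflectF _ => 0
  end.

(* Main.v *)
Require Import Defs.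
From mathcomp Require Import all_boot all_fingroup zify.
Set Implicit Arguments. Unset Strict Implicit. Unset Printing Implicit Defensive.

Definition cnt n h (p : profile n h) (y x : 'I_n) : nat := #|[set i | above (p i) y x]|.

Definition Good n h (p : profile n h) :=
  D (mu p) p != [set: 'I_n] /\
  D (mu p) p :&: D (mu (rev_prof p)) (rev_prof p) != set0.

Section Gen.
Variables (n h : nat).
Implicit Types p : profile n h.

Lemma inD m p x : (x \in D m p) = [forall y, cnt p y x < m].
Proof. by rewrite inE. Qed.

Lemma inDP m p x : reflect (forall y, cnt p y x < m) (x \in D m p).
Proof. rewrite inD; exact: forallP. Qed.

Lemma cnt_rev p y x : cnt (rev_prof p) y x = cnt p x y.
Proof. by rewrite /cnt; apply: eq_card => i; rewrite !inE above_rev. Qed.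

Lemma cnt_xx p x : cnt p x x = 0.
Proof. by rewrite /cnt; apply/eqP; rewrite cards_eq0; apply/eqP/setP=> i; rewrite !inE /above ltnn. Qed.

Lemma cnt_le p y x : cnt p y x <= h.
Proof. by rewrite /cnt; apply: leq_trans (max_card _) _; rewrite card_ord. Qed.

Lemma card_lt (A : {set 'I_h}) i : i \notin A -> #|A| < h.
Proof.
move=> Hi; have Eh : #|[set: 'I_h]| = h by rewrite cardsT card_ord.
rewrite -[X in _ < X]Eh; apply: proper_card.
by rewrite properT; apply/eqP => E1; move: Hi; rewrite E1 inE.
Qed.

Lemma cnt_sum p x y : x != y -> cnt p y x + cnt p x y = h.
Proof.
move=> Hxy; rewrite /cnt.
have -> : [set i | above (p i) x y] = ~: [set i | above (p i) y x].
  apply/setP => i; rewrite !inE /above.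
  have : p i x != p i y by rewrite (inj_eq perm_inj).
  rewrite -val_eqE /= => Hne; case: ltngtP Hne => //.
by rewrite cardsC card_ord.
Qed.

Lemma cnt_sum_ge p x y : x != y -> cnt p y x + cnt p x y = h.
Proof. exact: cnt_sum. Qed.

Lemma cnt_trans p u v w : h < cnt p u v + cnt p v w -> cnt p w u < h.
Proof.
rewrite /cnt => H.
set S1 := [set i | above (p i) u v]; set S2 := [set i | above (p i) v w].
have : 0 < #|S1 :&: S2|.
  have := cardsUI S1 S2.
  have : #|S1 :|: S2| <= h by apply: leq_trans (max_card _) _; rewrite card_ord.
  move=> H3 H4; rewrite -H4 in H; have := leq_add (leqnn #|S1 :&: S2|) H3; lia.
rewrite card_gt0 => /set0Pn [i]; rewrite !inE /above => /andP [H1 H2].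
apply: (@card_lt _ i); rewrite inE /above; lia.
Qed.

Lemma mu_min p m : muP p m -> mu p <= m.
Proof.
move=> Hm; rewrite /mu; destruct (@idP [exists m : 'I_h.+1, muP p m]) as [H|H].
  by case: ex_minnP => k _; apply.
exfalso; apply: H; apply/existsP.
have Hmh : m < h.+1 by case/and3P: Hm.
by exists (Ordinal Hmh).
Qed.

Lemma mu_spec p m : muP p m -> muP p (mu p).
Proof.
move=> Hm; rewrite /mu; destruct (@idP [exists m : 'I_h.+1, muP p m]) as [H|H].
  by case: ex_minnP.
exfalso; apply: H; apply/existsP.
have Hmh : m < h.+1 by case/and3P: Hm.
by exists (Ordinal Hmh).
Qed.

Lemma mu_eq p m : muP p m -> (forall k, k < m -> ~~ muP p k) -> mu p = m.
Proof.
move=> Hm Hk; apply/eqP; rewrite eqn_leq mu_min //=.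
rewrite leqNgt; apply/negP => Hlt.
by move: (Hk _ Hlt); rewrite (mu_spec Hm).
Qed.

Lemma pareto p : 0 < h -> 0 < n -> muP p h.
Proof.
move=> h0 n0; apply/and3P; split => //; first lia.
pose i0 := Ordinal h0.
apply/set0Pn; exists ((p i0)^-1 (Ordinal n0))%g; apply/inDP => y.
apply: (@card_lt _ i0); rewrite inE /above permKV /=; lia.
Qed.

End Gen.


Lemma cntE n h (p : profile n h) y x : cnt p y x = \sum_(i < h) (above (p i) y x : nat).
Proof.
rewrite /cnt -sum1_card big_mkcond /=; apply: eq_bigr => i _.
by rewrite inE; case: above.
Qed.

Definition liftp n h (p : profile n h) : profile n h.+2 :=
 [ffun i : 'I_h.+2 => if @insub _ (fun k => k < h) _ (val i) is Some j then p j
                     else if val i == h then 1%g else rev_perm n].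

Lemma cnt_lift n h (p : profile n h) y x :
  cnt (liftp p) y x = if x == y then 0 else (cnt p y x).+1.
Proof.
case: eqP => [->|/eqP Hxy]; first exact: cnt_xx.
rewrite !cntE 2!big_ord_recr /=.
rewrite (eq_bigr (fun i => nat_of_bool (above (p i) y x))); last first.
  move=> i _; rewrite ffunE /= (insubT (fun k => k < h) (ltn_ord i)) /=.
  by congr (nat_of_bool (above (p _) y x)); apply: val_inj.
rewrite !ffunE /= insubF ?ltnn // eqxx insubF; last by apply/negbTE; rewrite -leqNgt; apply: leqW.
have -> : (h.+1 == h) = false by elim: h {p}.
rewrite /above !perm1 /rev_perm !permE /=.
have : (y : nat) != x by rewrite val_eqE eq_sym.
case: y x Hxy => [y Hy] [x Hx] /= _; case: ltngtP => //= H _; lia.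
Qed.

Section LiftD.
Variables (n h : nat) (p : profile n h) (q : profile n h.+2).
Hypothesis Hc : forall y x, cnt q y x = if x == y then 0 else (cnt p y x).+1.
Hypotheses (h0 : 0 < h) (n0 : 0 < n).

Lemma D_lift k : 0 < k -> D k.+1 q = D k p.
Proof.
move=> k0; apply/setP => x; apply/inDP/inDP => H y; move: (H y); rewrite Hc.
  by case: eqP => [->|_]; rewrite ?cnt_xx.
by case: eqP.
Qed.

Lemma mu_lift : mu q = (mu p).+1.
Proof.
have Hp := mu_spec (pareto p h0 n0).
case/and3P: (Hp) => H1 H2 H3.
apply: mu_eq.
  apply/and3P; split; [lia | lia | by rewrite D_lift //; lia].
move=> [|k] Hk; apply/negP => /and3P [K1 K2 K3]; first by lia.
have : mu p <= k.
  apply: mu_min; apply/and3P; split; [lia | lia | by rewrite -D_lift //; lia].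
lia.
Qed.

Lemma DD_lift : D (mu q) q = D (mu p) p.
Proof.
rewrite mu_lift D_lift //.
by case/and3P: (mu_spec (pareto p h0 n0)); lia.
Qed.
End LiftD.

Lemma good_lift n h (p : profile n h) : 0 < h -> 0 < n -> Good p -> Good (liftp p).
Proof.
move=> h0 n0 [G1 G2].
have E1 : D (mu (liftp p)) (liftp p) = D (mu p) p by apply: DD_lift => // y x; exact: cnt_lift.
have E2 : D (mu (rev_prof (liftp p))) (rev_prof (liftp p)) = D (mu (rev_prof p)) (rev_prof p).
  apply: DD_lift => // y x; rewrite !cnt_rev cnt_lift eq_sym; done.
by rewrite /Good E1 E2.
Qed.


Lemma pig2 (a b c : 'I_2) : a != c -> b != c -> a = b.
Proof.
rewrite -!val_eqE; case: a b c => [a Ha] [b Hb] [c Hc] /= H1 H2.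
apply: val_inj => /=; lia.
Qed.

Lemma pig3 (a b c d : 'I_3) : a != b -> a != c -> a != d -> b != c -> b != d -> c != d -> False.
Proof.
rewrite -!val_eqE.
case: a b c d => [a Ha] [b Hb] [c Hc] [d Hd] /=; lia.
Qed.

Lemma notT n (A : {set 'I_n}) : A != setT -> exists z, z \notin A.
Proof.
move=> H; apply/existsP; move: H; apply: contraR; rewrite negb_exists => /forallP H.
by apply/eqP/setP => z; rewrite inE; move: (H z); rewrite negbK.
Qed.

Lemma notD n h (p : profile n h) m z : z \notin D m p -> exists w, m <= cnt p w z.
Proof.
by rewrite inD negb_forall => /existsP [w]; rewrite -leqNgt; exists w.
Qed.

Lemma imp2 h (p : profile 2 h) : 0 < h -> ~ Good p.
Proof.
move=> h0 [G1 /set0Pn [x]]; rewrite inE => /andP [/inDP Hx /inDP Hxr].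
case: (notT G1) => z /notD [w Hw].
have Hmu := mu_spec (pareto p h0 (isT : 0 < 2)).
case/and3P: Hmu => M1 M2 M3.
have zx : x != z by apply/eqP => E; subst z; have := Hx w; lia.
have wz : w != z by apply/eqP => E; subst w; move: Hw; rewrite cnt_xx; lia.
have E := pig2 wz zx; subst w.
have S := cnt_sum p zx.
have Hm : muP (rev_prof p) (h./2.+1).
  apply/and3P; split; last (apply/set0Pn; exists z; apply/inDP => y).
  - have := odd_double_half h; rewrite -addnn; lia.
  - have := odd_double_half h; rewrite -addnn; lia.
  - case: (eqVneq y z) => [->|yz]; first by rewrite cnt_xx.
    have E := pig2 yz zx; subst y.
    rewrite cnt_rev; have := Hx z; have := odd_double_half h; rewrite -addnn; lia.
have := mu_min Hm; have := Hxr z; rewrite cnt_rev.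
have := Hx z; have := odd_double_half h; rewrite -addnn; lia.
Qed.

Lemma other3 (x : 'I_3) : exists y, y != x.
Proof.
case: x => [[|k] Hk]; first by exists (Ordinal (isT : 1 < 3)).
by exists ord0.
Qed.

Lemma in3 (x w z u : 'I_3) : x != w -> x != z -> w != z -> u != x -> u = w \/ u = z.
Proof.
move=> xw xz wz ux.
case: (eqVneq u w) => [->|uw]; first by left.
case: (eqVneq u z) => [->|uz]; first by right.
exfalso; apply: (@pig3 x w z u xw xz _ wz); rewrite eq_sym //.
Qed.

Lemma imp33 (p : profile 3 3) : ~ Good p.
Proof.
move=> [G1 /set0Pn [x]]; rewrite inE => /andP [/inDP Hx /inDP Hxr].
have S u v : u != v -> cnt p v u + cnt p u v = 3 by apply: cnt_sum.
have Hm := mu_spec (pareto p (isT : 0 < 3) (isT : 0 < 3)).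
have Hmr := mu_spec (pareto (rev_prof p) (isT : 0 < 3) (isT : 0 < 3)).
case/and3P: Hm => M1 M2 _; case/and3P: Hmr => R1 R2 _.
have Hxr' y : cnt p x y < mu (rev_prof p) by rewrite -cnt_rev.
have noCW : mu p = 3 -> forall u, exists w, 2 <= cnt p w u.
  move=> E u; have D0 : D 2 p = set0.
    apply/eqP; apply: contraT => Hn.
    have : muP p 2 by apply/and3P.
    by move/mu_min; rewrite E.
  have : u \notin D 2 p by rewrite D0 inE.
  by case/notD => w; exists w.
have noCL : mu (rev_prof p) = 3 -> forall u, exists v, 2 <= cnt p u v.
  move=> E u; have D0 : D 2 (rev_prof p) = set0.
    apply/eqP; apply: contraT => Hn.
    have : muP (rev_prof p) 2 by apply/and3P.
    by move/mu_min; rewrite E.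
  have : u \notin D 2 (rev_prof p) by rewrite D0 inE.
  by case/notD => w; rewrite cnt_rev; exists w.
have ne u v : 1 <= cnt p u v -> u != v.
  by move=> H; apply/eqP => E; subst; move: H; rewrite cnt_xx.
case: (other3 x) => y1 y1x.
have [a2|a3] : mu p = 2 \/ mu p = 3 by lia.
  have [b2|b3] : mu (rev_prof p) = 2 \/ mu (rev_prof p) = 3 by lia.
    have := S _ _ y1x; have := Hx y1; have := Hxr' y1; lia.
  case: (noCL b3 y1) => v1 H1.
  case: (noCL b3 v1) => v2 H2.
  have v1y1 : y1 != v1 by apply: ne; lia.
  have v1x : v1 != x by apply/eqP => E; subst; have := Hx y1; lia.
  have v2v1 : v1 != v2 by apply: ne; lia.
  have v2x : v2 != x by apply/eqP => E; subst; have := Hx v1; lia.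
  have v2y1 : v2 != y1 by apply/eqP => E; subst; have := S _ _ v1y1; lia.
  by apply: (@pig3 x y1 v1 v2); rewrite // eq_sym.
have [b2|b3] : mu (rev_prof p) = 2 \/ mu (rev_prof p) = 3 by lia.
  case: (noCW a3 y1) => w1 H1.
  case: (noCW a3 w1) => w2 H2.
  have w1y1 : w1 != y1 by apply: ne; lia.
  have w1x : w1 != x by apply/eqP => E; subst; have := Hxr' y1; lia.
  have w2w1 : w2 != w1 by apply: ne; lia.
  have w2x : w2 != x by apply/eqP => E; subst; have := Hxr' w1; lia.
  have w2y1 : w2 != y1 by apply/eqP => E; subst; have := S _ _ w1y1; lia.
  by apply: (@pig3 x y1 w1 w2); rewrite // eq_sym.
case: (notT G1) => z /notD [w Hw]; rewrite a3 in Hw.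
have wz : w != z by apply: ne; lia.
have xz : x != z by apply/eqP => E; subst; have := Hx w; lia.
have xw : x != w by apply/eqP => E; subst; have := Hxr' z; lia.
case: (noCW a3 x) => u Hu; case: (noCL b3 x) => v Hv.
have ux : u != x by apply: ne; lia.
have vx : v != x by rewrite eq_sym; apply: ne; lia.
have uv : u != v by apply/eqP => E; subst; have := S _ _ ux; lia.
case: (in3 xw xz wz ux) => E1; case: (in3 xw xz wz vx) => E2; subst.
- by move: uv; rewrite eqxx.
- case: (noCW a3 w) => t Ht.
  have tw : t != w by apply: ne; lia.
  have tz : t != z by apply/eqP => E; subst; have := S _ _ wz; lia.
  have tx : t != x by apply/eqP => E; subst; have := S _ _ xw; lia.
  by apply: (@pig3 x w z t xw xz _ wz); rewrite eq_sym.
- have := @cnt_trans _ _ p z x w; lia.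
- by move: uv; rewrite eqxx.
Qed.


Section MkPerm.
Variables (n : nat) (g : nat -> nat).
Hypothesis Hg : forall i, i < n -> g i < n.
Hypothesis Hi : forall i j, i < n -> j < n -> g i = g j -> i = j.
Definition mkf (i : 'I_n) : 'I_n := Ordinal (Hg (ltn_ord i)).
Lemma mkf_inj : injective mkf.
Proof. move=> i j /(congr1 val) /= /Hi H; apply: val_inj; exact: H. Qed.
Definition mkperm : {perm 'I_n} := perm mkf_inj.
Lemma mkpermE i : (mkperm i : nat) = g i.
Proof. by rewrite permE. Qed.
End MkPerm.

Section P2.
Variable n' : nat.
Definition g2 (j : nat) := if j == n'.+2 then 0 else j.+1.
Definition gid (j : nat) := j.
Lemma g2_lt i : i < n'.+3 -> g2 i < n'.+3. Proof. rewrite /g2; case: eqP; lia. Qed.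
Lemma g2_inj i j : i < n'.+3 -> j < n'.+3 -> g2 i = g2 j -> i = j.
Proof. rewrite /g2; case: eqP; case: eqP; lia. Qed.
Lemma gid_lt m i : i < m -> gid i < m. Proof. by []. Qed.
Lemma gid_inj m i j : i < m -> j < m -> gid i = gid j -> i = j. Proof. by []. Qed.

Definition P2 : profile n'.+3 2 :=
  [ffun i : 'I_2 => nth 1%g [:: mkperm (@gid_lt n'.+3) (@gid_inj n'.+3); mkperm g2_lt g2_inj] i].

Lemma cntP2 y x : cnt P2 y x = (y < x) + (g2 y < g2 x).
Proof.
by rewrite cntE !big_ord_recr big_ord0 /= !ffunE /= /above !mkpermE.
Qed.
End P2.

Lemma good_P2 n' : Good (P2 n').
Proof.
set x : 'I_n'.+3 := ord_max.
have Dx : x \in D 2 (P2 n').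
  apply/inDP => y; rewrite cntP2 /g2 /= eqxx.
  have := ltn_ord y; case: eqP; lia.
have Dxr : x \in D 2 (rev_prof (P2 n')).
  apply/inDP => y; rewrite cnt_rev cntP2 /g2 /= eqxx.
  have := ltn_ord y; case: eqP; lia.
have M2 (q : profile n'.+3 2) : x \in D 2 q -> mu q = 2.
  move=> Hq; apply: mu_eq.
    by apply/and3P; split => //; apply/set0Pn; exists x.
  by move=> k Hk; apply/negP => /and3P [K1 K2 K3]; lia.
split; last by apply/set0Pn; exists x; rewrite inE (M2 _ Dx) (M2 _ Dxr) Dx Dxr.
rewrite (M2 _ Dx); apply/eqP => E.
have : (Ordinal (isT : 1 < n'.+3)) \in D 2 (P2 n') by rewrite E inE.
move/inDP => /(_ (Ordinal (isT : 0 < n'.+3))); rewrite cntP2 /g2 /=.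
by [].
Qed.

Section P3.
Variable n' : nat.
Definition gB (j : nat) := if j == 0 then 0 else if j == n'.+3 then 1 else j.+1.
Definition gC (j : nat) := if j == n'.+2 then 0 else if j == n'.+3 then 1 else if j == 0 then n'.+3 else j.+1.
Ltac brute := rewrite /gB /gC /=;
  repeat match goal with |- context [if ?a == ?b then _ else _] => case: (@eqP _ a b) => ? /= end;
  intros; lia.
Lemma gB_lt i : i < n'.+4 -> gB i < n'.+4. Proof. brute. Qed.
Lemma gB_inj i j : i < n'.+4 -> j < n'.+4 -> gB i = gB j -> i = j. Proof. brute. Qed.
Lemma gC_lt i : i < n'.+4 -> gC i < n'.+4. Proof. brute. Qed.
Lemma gC_inj i j : i < n'.+4 -> j < n'.+4 -> gC i = gC j -> i = j. Proof. brute. Qed.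

Definition P3 : profile n'.+4 3 :=
  [ffun i : 'I_3 => nth 1%g [:: mkperm (@gid_lt n'.+4) (@gid_inj n'.+4); mkperm gB_lt gB_inj;
                               mkperm gC_lt gC_inj] i].

Lemma cntP3 y x : cnt P3 y x = (y < x) + (gB y < gB x) + (gC y < gC x).
Proof.
by rewrite cntE !big_ord_recr big_ord0 /= !ffunE /= /above !mkpermE.
Qed.

Lemma good_P3 : Good P3.
Proof.
set x : 'I_n'.+4 := ord0.
have Dx : x \in D 2 P3.
  apply/inDP => y; rewrite cntP3 /=; have := ltn_ord y; brute.
have Dxr : x \in D 3 (rev_prof P3).
  apply/inDP => y; rewrite cnt_rev cntP3 /=; have := ltn_ord y; brute.
have M2 : mu P3 = 2.
  apply: mu_eq.
    by apply/and3P; split => //; apply/set0Pn; exists x.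
  by move=> k Hk; apply/negP => /and3P [K1 K2 K3]; lia.
have M3 : mu (rev_prof P3) = 3.
  apply: mu_eq.
    by apply/and3P; split => //; apply/set0Pn; exists x.
  move=> [|[|[|k]]] Hk //; apply/negP => /and3P [_ _ /set0Pn [u /inDP Hu]].
  have Hv : (if (u : nat) == 0 then 1 else if (u : nat) == n'.+3 then 1 else (u : nat).+1) < n'.+4.
    have := ltn_ord u; case: ifP => /eqP; try lia; case: ifP => /eqP; lia.
  move: (Hu (Ordinal Hv)); rewrite cnt_rev cntP3 /=.
  have := ltn_ord u; brute.
split; last by apply/set0Pn; exists x; rewrite inE M2 M3 Dx Dxr.
rewrite M2; apply/eqP => E.
have : (Ordinal (isT : 1 < n'.+4)) \in D 2 P3 by rewrite E inE.
move/inDP => /(_ (Ordinal (isT : 0 < n'.+4))); rewrite cntP3 /=.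
brute.
Qed.
End P3.

Definition g51 (j : nat) := if j == 2 then 0 else j.+1.
Definition g52 (j : nat) := if j == 0 then 2 else j.-1.
Lemma g51_lt i : i < 3 -> g51 i < 3. Proof. by case: i => [|[|[|]]]. Qed.
Lemma g51_inj i j : i < 3 -> j < 3 -> g51 i = g51 j -> i = j.
Proof. by case: i => [|[|[|]]] //; case: j => [|[|[|]]]. Qed.
Lemma g52_lt i : i < 3 -> g52 i < 3. Proof. by case: i => [|[|[|]]]. Qed.
Lemma g52_inj i j : i < 3 -> j < 3 -> g52 i = g52 j -> i = j.
Proof. by case: i => [|[|[|]]] //; case: j => [|[|[|]]]. Qed.

Definition P5 : profile 3 5 :=
  [ffun i : 'I_5 => nth 1%g [:: mkperm (@gid_lt 3) (@gid_inj 3); mkperm (@gid_lt 3) (@gid_inj 3);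
     mkperm g51_lt g51_inj; mkperm g51_lt g51_inj; mkperm g52_lt g52_inj] i].

Lemma cntP5 y x : cnt P5 y x = (y < x) + (y < x) + (g51 y < g51 x) + (g51 y < g51 x) + (g52 y < g52 x).
Proof.
by rewrite cntE !big_ord_recr big_ord0 /= !ffunE /= /above !mkpermE.
Qed.

Definition o3 (k : nat) (H : k < 3) : 'I_3 := Ordinal H.

Lemma good_P5 : Good P5.
Proof.
set x := o3 (isT : 2 < 3).
have Dx : x \in D 4 P5.
  by apply/inDP => -[[|[|[|?]]] Hy] //; rewrite cntP5.
have Dxr : x \in D 4 (rev_prof P5).
  by apply/inDP => -[[|[|[|?]]] Hy] //; rewrite cnt_rev cntP5.
have M : mu P5 = 4.
  apply: mu_eq.
    by apply/and3P; split => //; apply/set0Pn; exists x.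
  move=> k Hk; apply/negP => /and3P [K1 _ /set0Pn [u /inDP Hu]].
  have E3 : k = 3 by lia.
  subst k; case: u Hu => [m Hm] Hu; case: m Hm Hu => [|[|[|m]]] Hm Hu //.
  - by move: (Hu (o3 (isT : 2 < 3))); rewrite cntP5.
  - by move: (Hu (o3 (isT : 0 < 3))); rewrite cntP5.
  - by move: (Hu (o3 (isT : 1 < 3))); rewrite cntP5.
have Mr : mu (rev_prof P5) = 4.
  apply: mu_eq.
    by apply/and3P; split => //; apply/set0Pn; exists x.
  move=> k Hk; apply/negP => /and3P [K1 _ /set0Pn [u /inDP Hu]].
  have E3 : k = 3 by lia.
  subst k; case: u Hu => [m Hm] Hu; case: m Hm Hu => [|[|[|m]]] Hm Hu //.
  - by move: (Hu (o3 (isT : 1 < 3))); rewrite cnt_rev cntP5.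
  - by move: (Hu (o3 (isT : 2 < 3))); rewrite cnt_rev cntP5.
  - by move: (Hu (o3 (isT : 0 < 3))); rewrite cnt_rev cntP5.
split; last by apply/set0Pn; exists x; rewrite inE M Mr Dx Dxr.
rewrite M; apply/eqP => E.
have : (o3 (isT : 1 < 3)) \in D 4 P5 by rewrite E inE.
by move/inDP => /(_ (o3 (isT : 0 < 3))); rewrite cntP5.
Qed.


Lemma exists_good k : forall n, 3 <= n -> ~ (k.+2 = 3 /\ n = 3) -> exists p : profile n k.+2, Good p.
Proof.
elim/ltn_ind: k => k IH n Hn Hne.
case: k IH Hne => [|[|m]] IH Hne.
- case: n Hn Hne => [|[|[|n']]] // _ _; by exists (P2 n'); exact: good_P2.
- case: n Hn Hne => [|[|[|[|n']]]] // _ Hne; first by exfalso; apply: Hne.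
  by exists (P3 n'); exact: good_P3.
- have [[E1 E2]|Hne'] : (m = 1 /\ n = 3) \/ ~ (m.+2 = 3 /\ n = 3) by lia.
    by subst; exists P5; exact: good_P5.
  case: (IH m (leqW (leqnn _)) n Hn Hne') => p Gp.
  exists (liftp p); apply: good_lift => //; lia.
Qed.

Theorem proposition5 (n h : nat) (hn : 2 <= n) (hh : 2 <= h) :
  (exists p : profile n h,
      D (mu p) p != [set: 'I_n] /\
      D (mu p) p :&: D (mu (rev_prof p)) (rev_prof p) != set0)
  <-> ~ (n = 2 \/ (h = 3 /\ n = 3)).
Proof.
split.
  move=> [p G] [E|[E1 E2]]; subst.
    by apply: (imp2 (p := p)) => //; lia.
  exact: (imp33 G).
move=> H; case: h hh H => [|[|k]] // _ H.
have [p Gp] := exists_good (n := n) (k := k) ltac:(lia) ltac:(lia).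
by exists p.
Qed.
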